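(* Let $A\in\mathbb Z^{d\times n}$ with $\ker(A)\cap\mathbb N^n=\{0\}$. Suppose that $A$ has a unique minimal Markov basis $M$ up to replacing its elements by their negatives. If $M$ is distance reducing, then $S(A)=D(A)=M(A)=\mathcal D(A)$.
   Context: For $z\in\mathbb Z^n$, $z^\pm\in\mathbb N^n$ are the unique vectors with disjoint supports and $z=z^+-z^-$; $\|\cdot\|$ is the $1$-norm; $\le$ is coordinatewise. A Markov basis is a set $B\subseteq\ker(A)$ whose binomials $x^{u^+}-x^{u^-}$ generate the toric ideal $I_A=\langle x^{u^+}-x^{u^-}:u\in\ker(A)\rangle$; minimal means no proper subset is one. $M(A)$ is the union of all minimal Markov bases. $S(A)$ is the set of nonzero $z\in\ker(A)$ with no decomposition $z=u+v$, $u,v\in\ker(A)\setminus\{0\}$, such that $u_i>0\Rightarrow v_i\ge0$ for all $i$. A positive (resp. negative) distance decomposition of $z$ is $z=u+v$ with $u,v\in\ker(A)\setminus\{0\}$, $u^+\le z^+$ (resp. $u^-\le z^-$), $\|v\|<\|z\|$; $D(A)$ is the set of nonzero $z\in\ker(A)$ admitting neither. For nonzero $z\in\ker(A)$, $u$ reduces the distance of $z$ if there exist $(p,q)\in\{(z^+,z^-),(z^-,z^+)\}$ and $\varepsilon\in\{\pm1\}$ with $p+\varepsilon u\in\mathbb N^n$ and $\|p+\varepsilon u-q\|<\|z\|$; $B$ is distance reducing if every nonzero $z\in\ker(A)$ has its distance reduced by some element of $B$. $\mathcal D(A)$ is the union of all minimal distance reducing Markov bases, i.e., distance reducing sets $B\subseteq\ker(A)$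 no proper subset of which is distance reducing. *)

(* Defs.v *)
From HB Require Import structures.
From mathcomp Require Import all_boot all_order all_algebra.
From mathcomp Require Import mpoly.
Set Implicit Arguments. Unset Strict Implicit. Unset Printing Implicit Defensive.
Import Order.TTheory GRing.Theory Num.Theory.
Local Open Scope ring_scope.

Section Toric.
Variables (d n : nat) (A : 'M[int]_(d, n)).

Definition inker (z : 'cV[int]_n) : Prop := A *m z = 0.

Definition vpos (z : 'cV[int]_n) (i : 'I_n) : nat :=
  if (0 <= z i ord0) then absz (z i ord0) else 0%N.
Definition vneg (z : 'cV[int]_n) (i : 'I_n) : nat :=
  if (z i ord0 < 0) then absz (z i ord0) else 0%N.

Definition norm1 (z : 'cV[int]_n) : nat := (\sum_(i < n) absz (z i ord0))%N.

Definition nat2int (p : 'I_n -> nat) : 'cV[int]_n := \col_i (p i)%:Z.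

Variable K : fieldType.

Definition monom (u : 'I_n -> nat) : {mpoly K[n]} := 'X_[ [multinom u i | i < n] ].

Definition binom (z : 'cV[int]_n) : {mpoly K[n]} := monom (vpos z) - monom (vneg z).

Definition in_ideal_gen (G : {mpoly K[n]} -> Prop) (p : {mpoly K[n]}) : Prop :=
  exists s : seq ({mpoly K[n]} * {mpoly K[n]}),
    (forall c, c \in s -> G c.2) /\ p = \sum_(c <- s) c.1 * c.2.

Definition binoms (B : 'cV[int]_n -> Prop) (p : {mpoly K[n]}) : Prop :=
  exists2 u, B u & p = binom u.

Definition toric_ideal (p : {mpoly K[n]}) : Prop := in_ideal_gen (binoms inker) p.

Definition markov_basis (B : 'cV[int]_n -> Prop) : Prop :=
  (forall z, B z -> inker z) /\
  (forall p, in_ideal_gen (binoms B) p <-> toric_ideal p).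

Definition minimal_markov_basis (B : 'cV[int]_n -> Prop) : Prop :=
  markov_basis B /\
  (forall B', (forall z, B' z -> B z) -> markov_basis B' -> forall z, B z -> B' z).

Definition Mset (z : 'cV[int]_n) : Prop :=
  exists2 B, minimal_markov_basis B & B z.

Definition same_up_to_sign (B M : 'cV[int]_n -> Prop) : Prop :=
  (forall z, B z -> M z \/ M (- z)) /\ (forall z, M z -> B z \/ B (- z)).

Definition unique_minimal_markov (M : 'cV[int]_n -> Prop) : Prop :=
  minimal_markov_basis M /\
  (forall B, minimal_markov_basis B -> same_up_to_sign B M).

End Toric.

Section Sets.
Variables (d n : nat) (A : 'M[int]_(d, n)).

Definition Sset (z : 'cV[int]_n) : Prop :=
  inker A z /\ z <> 0 /\
  ~ (exists u v, inker A u /\ inker A v /\ u <> 0 /\ v <> 0 /\ z = u + v /\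
                 (forall i, 0 < u i ord0 -> 0 <= v i ord0)).

Definition pos_dist_decomp (z : 'cV[int]_n) : Prop :=
  exists u v, inker A u /\ inker A v /\ u <> 0 /\ v <> 0 /\ z = u + v /\
    (forall i, (vpos u i <= vpos z i)%N) /\ (norm1 v < norm1 z)%N.

Definition neg_dist_decomp (z : 'cV[int]_n) : Prop :=
  exists u v, inker A u /\ inker A v /\ u <> 0 /\ v <> 0 /\ z = u + v /\
    (forall i, (vneg u i <= vneg z i)%N) /\ (norm1 v < norm1 z)%N.

Definition Dset (z : 'cV[int]_n) : Prop :=
  inker A z /\ z <> 0 /\ ~ pos_dist_decomp z /\ ~ neg_dist_decomp z.

Definition reduces_distance (u z : 'cV[int]_n) : Prop :=
  exists (pq : ('I_n -> nat) * ('I_n -> nat)) (eps : int),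
    (pq = (vpos z, vneg z) \/ pq = (vneg z, vpos z)) /\
    (eps = 1 \/ eps = -1) /\
    (forall i, 0 <= (nat2int pq.1 + eps *: u) i ord0) /\
    (norm1 (nat2int pq.1 + eps *: u - nat2int pq.2) < norm1 z)%N.

Definition distance_reducing (B : 'cV[int]_n -> Prop) : Prop :=
  forall z, inker A z -> z <> 0 -> exists2 u, B u & reduces_distance u z.

Definition minimal_distance_reducing (B : 'cV[int]_n -> Prop) : Prop :=
  (forall z, B z -> inker A z) /\ distance_reducing B /\
  (forall B', (forall z, B' z -> B z) -> distance_reducing B' -> forall z, B z -> B' z).

Definition Dcalset (z : 'cV[int]_n) : Prop :=
  exists2 B, minimal_distance_reducing B & B z.

End Sets.

(* Main.v *)
Require Import Defs.
From HB Require Import structures.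
From mathcomp Require Import all_boot all_order all_algebra.
From mathcomp Require Import mpoly ssrcomplements.
From mathcomp Require Import zify.
From Stdlib Require Import Classical ClassicalEpsilon.
Import Order.TTheory GRing.Theory Num.Theory.
Local Open Scope ring_scope.
Set Implicit Arguments. Unset Strict Implicit. Unset Printing Implicit Defensive.

Section Comb.
Variables (d n : nat) (A : 'M[int]_(d, n)).
Local Notation cV := 'cV[int]_n.
Implicit Types (B G : cV -> Prop) (x y z u v w : cV).

Definition nonneg x := forall i, 0 <= x i ord0.
Definition pp z := nat2int (vpos z).
Definition nn z := nat2int (vneg z).

Lemma cwE x y : (forall i, x i ord0 = y i ord0) -> x = y.
Proof. move=> h; apply/matrixP => i j; by rewrite (ord1 j). Qed.

Lemma entry x y i : x = y -> x i ord0 = y i ord0.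
Proof. by move=> ->. Qed.

Ltac ifs := repeat match goal with |- context [if ?b then _ else _] => case: (boolP b) => ? end.
Lemma eD x y i : (x + y) i ord0 = x i ord0 + y i ord0 :> int. Proof. by rewrite mxE. Qed.
Lemma eN x i : (- x) i ord0 = - x i ord0 :> int. Proof. by rewrite mxE. Qed.
Lemma e0 i : (0%R : cV) i ord0 = 0%R :> int. Proof. by rewrite mxE. Qed.
Lemma eC (f : 'I_n -> nat) i : (nat2int f) i ord0 = (f i)%:Z. Proof. by rewrite mxE. Qed.
Ltac ee := do 3 rewrite ?eC ?eD ?eN ?e0.
Ltac gent := idtac.
Ltac lia' := gent; lia.
Ltac vl := apply: cwE => i; rewrite /pp /nn /vpos /vneg; ee; ifs; lia'.

Lemma ppE z i : pp z i ord0 = if 0 <= z i ord0 then z i ord0 else 0.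
Proof. rewrite /pp /nat2int mxE /vpos; case: ifP => h //; lia. Qed.
Lemma nnE z i : nn z i ord0 = if z i ord0 < 0 then - z i ord0 else 0.
Proof. rewrite /nn /nat2int mxE /vneg; case: ifP => h //; lia. Qed.

Lemma ppnn z : pp z - nn z = z.
Proof. vl. Qed.
Lemma nonneg_pp z : nonneg (pp z).
Proof. move=> i; rewrite ppE; case: ifP => //; lia. Qed.
Lemma nonneg_nn z : nonneg (nn z).
Proof. move=> i; rewrite nnE; case: ifP => //; lia. Qed.
Lemma pp0 : pp 0 = nn 0.
Proof. vl. Qed.
Lemma ppN z : pp (- z) = nn z.
Proof. vl. Qed.
Lemma nnN z : nn (- z) = pp z.
Proof. vl. Qed.

Inductive conn B x : cV -> Prop :=
| conn0 : conn B x x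
| connS y y' u : conn B x y -> B u -> (y' = y + u \/ y' = y - u) -> nonneg y' -> conn B x y'.

Lemma conn_nonneg B x y : conn B x y -> nonneg x -> nonneg y.
Proof. by elim. Qed.

Lemma conn_trans B x y z : conn B x y -> conn B y z -> conn B x z.
Proof. move=> h1 h2; elim: h2 => // y1 y2 u _ IH Bu e nn2; exact: connS IH Bu e nn2. Qed.

Lemma conn_step B y y' u : B u -> (y' = y + u \/ y' = y - u) -> nonneg y' -> conn B y y'.
Proof. move=> Bu e h; exact: connS (conn0 _ _) Bu e h. Qed.

Lemma conn_sym B x y : nonneg x -> conn B x y -> conn B y x.
Proof.
move=> hx h; elim: h => [|y1 y2 u c IH Bu e nn2]; first exact: conn0.
apply: conn_trans IH; apply: conn_step Bu _ (conn_nonneg c hx).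
case: e => ->; [right|left]; by rewrite ?addrK ?subrK.
Qed.

Lemma conn_mono B B' x y : (forall u, B u -> B' u) -> conn B x y -> conn B' x y.
Proof. move=> s; elim => [|y1 y2 u _ IH Bu e h]; [exact: conn0|exact: connS IH (s _ Bu) e h]. Qed.

Lemma conn_transl B x y c : nonneg c -> conn B x y -> conn B (x + c) (y + c).
Proof.
move=> hc; elim => [|y1 y2 u _ IH Bu e h]; first exact: conn0.
apply: connS IH Bu _ _.
  case: e => ->; [left|right]; by rewrite addrAC.
move=> i; ee; have := h i; have := hc i; lia.
Qed.

Lemma conn_ker B x y : (forall u, B u -> inker A u) -> conn B x y -> A *m y = A *m x.
Proof.
move=> hk; elim => // y1 y2 u _ IH Bu e _; have ku := hk _ Bu; rewrite /inker in ku.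
by case: e => ->; rewrite ?mulmxDr ?mulmxN ku ?oppr0 ?addr0.
Qed.

Lemma decomp a b y : nonneg a -> nonneg b -> a - b = y ->
  nonneg (a - pp y) /\ a = pp y + (a - pp y) /\ b = nn y + (a - pp y).
Proof.
move=> ha hb e; split; [|split].
- move=> i; have := entry i e; have := ha i; have := hb i; rewrite /pp /vpos; ee; ifs; lia'.
- by rewrite addrC subrK.
- apply: cwE => i; have := entry i e; have := ha i; have := hb i; rewrite /pp /nn /vpos /vneg; ee; ifs; lia'.
Qed.

Lemma conn_transl_ker B y a b : conn B (pp y) (nn y) -> nonneg a -> nonneg b -> a - b = y -> conn B a b.
Proof.
move=> c ha hb e; have [hg [ea eb]] := decomp ha hb e.
move: hg ea eb; set g := a - pp y => hg ea eb.
by rewrite ea eb; apply: conn_transl.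
Qed.

Lemma step_pp B u : B u -> conn B (pp u) (nn u).
Proof. move=> Bu; apply: conn_step Bu _ (nonneg_nn u); right; vl. Qed.

Lemma step_neg B u : B (- u) -> conn B (pp u) (nn u).
Proof. move=> Bu; apply: conn_step Bu _ (nonneg_nn u); left; vl. Qed.

Lemma conn_sub B B' x y : (forall u, B u -> conn B' (pp u) (nn u)) -> nonneg x -> conn B x y -> conn B' x y.
Proof.
move=> hs hx c; elim: c => [|y1 y2 u c IH Bu e h]; first exact: conn0.
apply: conn_trans IH _; have h1 := conn_nonneg c hx.
case: e => e.
- have eu : y2 - y1 = u by rewrite e; vl.
  have [hg [ea eb]] := decomp h h1 eu.
  move: hg ea eb; set g := y2 - pp u => hg ea eb.
  rewrite ea eb; apply: conn_transl hg _; exact: conn_sym (nonneg_pp u) (hs u Bu).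
- have eu : y1 - y2 = u by rewrite e; vl.
  have [hg [ea eb]] := decomp h1 h eu.
  move: hg ea eb; set g := y1 - pp u => hg ea eb.
  rewrite ea eb; apply: conn_transl hg _; exact: hs u Bu.
Qed.

Definition MB B := (forall u, B u -> inker A u) /\ (forall z, inker A z -> conn B (pp z) (nn z)).
Definition minMB B := MB B /\ forall B', (forall z, B' z -> B z) -> MB B' -> forall z, B z -> B' z.
Definition posA := forall z, inker A z -> nonneg z -> z = 0.

Lemma inkerB a b : A *m a = A *m b -> inker A (a - b).
Proof. by move=> e; rewrite /inker mulmxBr e subrr. Qed.

Lemma inkerN z : inker A z -> inker A (- z).
Proof. by rewrite /inker mulmxN => ->; rewrite oppr0. Qed.

Lemma ker_ppnn z : inker A z -> A *m pp z = A *m nn z.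
Proof. move=> k; apply/eqP; rewrite -subr_eq0 -mulmxBr ppnn; exact/eqP. Qed.

Lemma conn_MB B a b : MB B -> nonneg a -> nonneg b -> A *m a = A *m b -> conn B a b.
Proof. move=> [_ h] ha hb e; exact: conn_transl_ker (h _ (inkerB e)) ha hb erefl. Qed.

Lemma MB_sub B B' : (forall u, B' u -> inker A u) -> (forall u, B u -> conn B' (pp u) (nn u)) -> MB B -> MB B'.
Proof.
move=> hk hs [_ h]; split => // z kz; apply: conn_sub hs (nonneg_pp z) (h z kz).
Qed.

Lemma oppeq0 z : z = - z -> z = 0.
Proof. move=> e; apply: cwE => i; have := entry i e; ee; lia'. Qed.

Definition Rel G s x y := conn G x y \/ (conn G x (pp s) /\ conn G (nn s) y) \/ (conn G x (nn s) /\ conn G (pp s) y).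

Lemma fiber B s x y : (forall u, B u -> inker A u) -> B s -> nonneg x ->
  (forall c, nonneg c -> A *m (pp s + c) = A *m x -> c = 0) -> conn B x y ->
  Rel (fun v => B v /\ v <> s) s x y.
Proof.
move=> hk Bs hx hc c; elim: c => [|y1 y2 u c IH Bu e h]; first by left; exact: conn0.
have h1 := conn_nonneg c hx.
have k2 : A *m y2 = A *m x := conn_ker hk (connS c Bu e h).
have k1 : A *m y1 = A *m x := conn_ker hk c.
have [us|uns] := classic (u = s); last first.
  case: IH => [c1|[[c1 c2]|[c1 c2]]].
  - by left; exact: connS c1 (conj Bu uns) e h.
  - by right; left; split => //; exact: connS c2 (conj Bu uns) e h.
  - by right; right; split => //; exact: connS c2 (conj Bu uns) e h.
subst u; case: e => e.
- have eu : y2 - y1 = s by rewrite e; vl.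
  have [hg [ea eb]] := decomp h h1 eu.
  move: hg ea eb; set g := y2 - pp s => hg ea eb.
  have g0 : g = 0 by apply: (hc g hg); rewrite -ea.
  have E2 : y2 = pp s by rewrite ea g0 addr0.
  have E1 : y1 = nn s by rewrite eb g0 addr0.
  rewrite E2; rewrite E1 in IH.
  case: IH => [c1|[[c1 c2]|[c1 c2]]].
  - by right; right; split => //; exact: conn0.
  - by left.
  - by right; right; split => //; exact: conn0.
- have eu : y1 - y2 = s by rewrite e; vl.
  have [hg [ea eb]] := decomp h1 h eu.
  move: hg ea eb; set g := y1 - pp s => hg ea eb.
  have g0 : g = 0 by apply: (hc g hg); rewrite -ea.
  have E1 : y1 = pp s by rewrite ea g0 addr0.
  have E2 : y2 = nn s by rewrite eb g0 addr0.
  rewrite E2; rewrite E1 in IH.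
  case: IH => [c1|[[c1 c2]|[c1 c2]]].
  - by right; left; split => //; exact: conn0.
  - by right; left; split => //; exact: conn0.
  - by left.
Qed.

Lemma sum0 c g : nonneg c -> nonneg g -> c + g = 0 -> c = 0.
Proof.
move=> hc hg e; apply: cwE => i; have := entry i e; have := hc i; have := hg i; ee; lia'.
Qed.

Lemma nonnegD c g : nonneg c -> nonneg g -> nonneg (c + g).
Proof. move=> hc hg i; have := hc i; have := hg i; ee; lia'. Qed.

Section Min.
Variable M : cV -> Prop.
Hypothesis hM : minMB M.
Hypothesis hpos : posA.

Lemma minMB_ker z : M z -> inker A z.
Proof. move=> Mz; case: hM => [[hk _] _]; exact: hk. Qed.

Lemma minMB_nz z : M z -> z <> 0.
Proof.
move=> Mz; case: hM => hMB hmin.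
suff hG : MB (fun x => M x /\ x <> 0) by case: (hmin _ (fun x => @proj1 _ _) hG z Mz).
apply: MB_sub hMB => [u [Mu _]|u Mu]; first exact: minMB_ker.
have [->|nz] := classic (u = 0); first by rewrite pp0; exact: conn0.
exact: step_pp.
Qed.

Lemma minMB_nneg z : M z -> ~ M (- z).
Proof.
move=> Mz Mnz; case: hM => hMB hmin.
suff hG : MB (fun x => M x /\ x <> - z) by case: (hmin _ (fun x => @proj1 _ _) hG _ Mnz).
apply: MB_sub hMB => [u [Mu _]|u Mu]; first exact: minMB_ker.
have [->|nz] := classic (u = - z); last exact: step_pp.
apply: step_neg; rewrite opprK; split => // e; exact: minMB_nz Mz (oppeq0 e).
Qed.

Definition flip z x := (M x /\ x <> z) \/ x = - z.

Lemma flip_min z : M z -> minMB (flip z).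
Proof.
move=> Mz; have kz := minMB_ker Mz; have nz := minMB_nz Mz.
have znz : z <> - z by move=> e; exact: nz (oppeq0 e).
case: hM => hMB hmin; split.
  apply: MB_sub hMB => [u [[Mu _]|->]|u Mu]; [exact: minMB_ker|exact: inkerN|].
  have [->|ne] := classic (u = z); last by apply: step_pp; left; split.
  by apply: step_neg; right.
move=> B' sB' hB'.
pose B'' x := (B' x /\ x <> - z) \/ (x = z /\ B' (- z)).
have sB'' : forall x, B'' x -> M x.
  move=> x [[/sB' [[]//|] ]|[-> _]] //.
have hB'' : MB B''.
  apply: MB_sub hB' => [u /sB''|u Bu]; first exact: minMB_ker.
  have [eu|ne] := classic (u = - z); last by apply: step_pp; left; split.
  by apply: step_neg; right; split; [rewrite eu opprK | rewrite -eu].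
have := hmin B'' sB'' hB''.
move=> h x [[Mx nxz]|->].
  by case: (h x Mx) => [[]|[]].
case: (h z Mz) => [[/sB' [[_]|]//] | [_]] //.
Qed.


Lemma noG0 z : M z -> ~ conn (fun v => M v /\ v <> z) (pp z) (nn z).
Proof.
move=> Mz c; case: hM => hMB hmin.
suff hG : MB (fun v => M v /\ v <> z) by case: (hmin _ (fun x => @proj1 _ _) hG z Mz).
apply: MB_sub hMB => [u [Mu _]|u Mu]; first exact: minMB_ker.
have [->|ne] := classic (u = z); first exact: c.
by apply: step_pp; split.
Qed.

Lemma posA0 c : A *m c = 0 -> nonneg c -> c = 0.
Proof. move=> e h; exact: hpos e h. Qed.

Lemma swap z w : M z -> nonneg w -> A *m w = A *m pp z -> w <> pp z ->
  conn (fun v => M v /\ v <> z) w (pp z) ->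
  exists M2, minMB M2 /\ ~ M2 z /\ ~ M2 (- z).
Proof.
move=> Mz hw ew nwp cw.
have kz := minMB_ker Mz; have nz := minMB_nz Mz; have nnz := minMB_nneg Mz.
have H1 := noG0 Mz.
case: (hM) => hMB hmin; have kM := hMB.1.
pose G0 := fun v => M v /\ v <> z.
have ewn : A *m w = A *m nn z by rewrite ew ker_ppnn.
pose z2 := w - nn z.
have kz2 : inker A z2 := inkerB ewn.
have [hg [ea eb]] := decomp hw (nonneg_nn z) (erefl : w - nn z = z2).
move: hg ea eb; set g := w - pp z2 => hg ea eb.
have Ag : A *m g = A *m pp z - A *m pp z2.
  have e' := congr1 (mulmx A) ea; rewrite mulmxDr in e'.
  by rewrite -ew e' addrAC subrr add0r.
have gz : A *m pp z2 = A *m pp z -> g = 0.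
  by move=> e; apply: posA0 hg; rewrite Ag e subrr.
have g0 : g = 0.
  have c2 : conn M (pp z2) (nn z2) := hMB.2 z2 kz2.
  have hc : forall c, nonneg c -> A *m (pp z + c) = A *m pp z2 -> c = 0.
    move=> c hc e.
    have Ac : A *m c = A *m pp z2 - A *m pp z by rewrite -e mulmxDr addrAC subrr add0r.
    apply: (sum0 hc hg); apply: posA0 (nonnegD hc hg).
    by rewrite mulmxDr Ac Ag addrA subrK subrr.
  case: (fiber kM Mz (nonneg_pp z2) hc c2) => [c1|[[c1 _]|[c1 _]]].
  - exfalso; apply: H1; apply: conn_trans (conn_sym hw cw) _.
    by rewrite ea eb; apply: conn_transl.
  - apply: gz; symmetry; apply: (conn_ker (fun u h => kM u (proj1 h)) c1).
  - apply: gz; rewrite (ker_ppnn kz); symmetry; apply: (conn_ker (fun u h => kM u (proj1 h)) c1).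
rewrite g0 addr0 in ea; rewrite g0 addr0 in eb.
pose M2 x := G0 x \/ x = z2.
have sG0 : forall v, G0 v -> M2 v by move=> v h; left.
have kM2 : forall u, M2 u -> inker A u by move=> u [[Mu _]|->] //; exact: kM.
exists M2; split; [|split].
- split.
    apply: (MB_sub kM2 _ hMB) => u Mu.
    have [->|ne] := classic (u = z); last by apply: step_pp; left; split.
    apply: conn_trans (conn_mono sG0 (conn_sym hw cw)) _.
    apply: conn_step (nonneg_nn z); first by right.
    by right; rewrite /z2; vl.
  move=> B' sB' hB'.
  have kB' : forall u, B' u -> inker A u by move=> u /sB'; exact: kM2.
  have HA : B' z2.
    apply: NNPP => nb; apply: H1; apply: conn_mono (hB'.2 z kz) => u Bu.
    by case: (sB' u Bu) => // e; case: nb; rewrite -e.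
  pose B'' x := (B' x /\ x <> z2) \/ x = z.
  have sB'' : forall x, B'' x -> M x.
    by move=> x [[Bx ne]|->] //; case: (sB' x Bx) => [[]|] //.
  have hB'' : MB B''.
    apply: (MB_sub _ _ hB') => [u [[Bu _]|->]|u Bu]; [exact: kB'|exact: kz|].
    have [eu|ne] := classic (u = z2); last by apply: step_pp; left; split.
    rewrite eu -ea -eb.
    have cB : conn B' w (pp z) := conn_MB hB' hw (nonneg_pp z) ew.
    have hc' : forall c, nonneg c -> A *m (pp z2 + c) = A *m w -> c = 0.
      move=> c hc; rewrite -ea mulmxDr => e; apply: posA0 hc.
      by apply/eqP; rewrite -(inj_eq (addrI (A *m w))) addr0 e.
    have sG'1 : forall v, B' v /\ v <> z2 -> B'' v by move=> v h; left.
    have sG'2 : forall v, B' v /\ v <> z2 -> G0 v.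
      by move=> v [Bv nv]; case: (sB' v Bv).
    case: (fiber kB' HA hw hc' cB) => [c1|[[c1 c2]|[c1 c2]]].
    + apply: conn_trans (conn_mono sG'1 c1) _.
      apply: conn_step (nonneg_nn z); first by right.
      by right; vl.
    + exfalso; apply: H1; apply: conn_sym (nonneg_nn z) _.
      by rewrite eb; apply: conn_mono sG'2 c2.
    + by rewrite eb; apply: conn_mono sG'1 c1.
  have h := hmin B'' sB'' hB''.
  move=> x [[Mx nxz]|->] //.
  by case: (h x Mx) => [[]|].
- case=> [[_ []]|e] //; apply: nwp; rewrite /z2 in e.
  apply: cwE => i; have := entry i e; rewrite /pp /nn /vpos /vneg; ee; ifs; lia'.
- case=> [[Mn _]|e]; first exact: nnz.
  apply: nz; apply/eqP; rewrite -oppr_eq0; apply/eqP; apply: posA0.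
    by have := inkerN kz.
  move=> i; have := entry i e; have := hw i; rewrite /z2 /nn /vneg; ee; ifs; lia'.
Qed.
End Min.

Lemma key M (hpos : posA) (hM : minMB M)
  (hU : forall B, minMB B -> forall z, M z -> B z \/ B (- z)) z w :
  M z -> nonneg w -> A *m w = A *m pp z -> w = pp z \/ w = nn z.
Proof.
move=> Mz hw ew.
have [e|ne1] := classic (w = pp z); first by left.
have [e|ne2] := classic (w = nn z); first by right.
exfalso.
case: (hM) => hMB _; have kM := hMB.1.
have fin : forall M2, minMB M2 -> ~ M2 z -> ~ M2 (- z) -> False.
  by move=> M2 h2 a b; case: (hU M2 h2 z Mz).
have cM := conn_MB hMB hw (nonneg_pp z) ew.
have hc : forall c, nonneg c -> A *m (pp z + c) = A *m w -> c = 0.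
  move=> c hc; rewrite mulmxDr ew => e; apply: (posA0 hpos) hc.
  by apply/eqP; rewrite -(inj_eq (addrI (A *m pp z))) addr0 e.
case: (fiber kM Mz hw hc cM) => [c1|[[c1 _]|[c1 _]]].
- by case: (swap hM hpos Mz hw ew ne1 c1) => M2 [h2 [a b]]; exact: fin h2 a b.
- by case: (swap hM hpos Mz hw ew ne1 c1) => M2 [h2 [a b]]; exact: fin h2 a b.
- have hM' := flip_min hM Mz.
  have Mz' : flip M z (- z) by right.
  have ew' : A *m w = A *m pp (- z) by rewrite ppN ew (ker_ppnn (minMB_ker hM Mz)).
  have ne' : w <> pp (- z) by rewrite ppN.
  have c1' : conn (fun v => flip M z v /\ v <> - z) w (pp (- z)).
    rewrite ppN; apply: conn_mono c1 => v [Mv nv]; split; first by left.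
    by move=> e; apply: (minMB_nneg hM Mz); rewrite -e.
  case: (swap hM' hpos Mz' hw ew' ne' c1') => M2 [h2 [a b]].
  rewrite opprK in b; exact: fin h2 b a.
Qed.

Lemma fib_pm M (hpos : posA) (hM : minMB M)
  (hU : forall B, minMB B -> forall z, M z -> B z \/ B (- z)) z w :
  (M z \/ M (- z)) -> nonneg w -> A *m w = A *m pp z -> w = pp z \/ w = nn z.
Proof.
move=> [Mz|Mz] hw ew; first exact: (key hpos hM hU Mz hw ew).
have kz : inker A z by rewrite -(opprK z); apply: inkerN; exact: (minMB_ker hM Mz).
have ew' : A *m w = A *m pp (- z) by rewrite ppN ew (ker_ppnn kz).
by case: (key hpos hM hU Mz hw ew') => ->; rewrite ?ppN ?nnN; [right|left].
Qed.

Lemma pm_ker M (hM : minMB M) z : (M z \/ M (- z)) -> inker A z /\ z <> 0.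
Proof.
case=> Mz; first by split; [exact: (minMB_ker hM Mz)|exact: (minMB_nz hM Mz)].
split; first by rewrite -(opprK z); apply: inkerN; exact: (minMB_ker hM Mz).
by move=> e; apply: (minMB_nz hM Mz); rewrite e oppr0.
Qed.

Lemma pm_S M (hpos : posA) (hM : minMB M)
  (hU : forall B, minMB B -> forall z, M z -> B z \/ B (- z)) z :
  (M z \/ M (- z)) -> Sset A z.
Proof.
move=> hz; have [kz nz] := pm_ker hM hz.
split => //; split => // [[u [v [ku [kv [nu [nv [ezuv hi]]]]]]]].
have hw : nonneg (pp z - u).
  move=> i; have := entry i ezuv; have := hi i; rewrite /pp /vpos; ee; ifs; lia'.
have ew : A *m (pp z - u) = A *m pp z by rewrite mulmxBr ku subr0.
case: (fib_pm hpos hM hU hz hw ew) => e.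
- by apply: nu; apply: cwE => i; have := entry i e; ee; lia'.
- apply: nv; apply: cwE => i; have := entry i e; have := entry i ezuv.
  rewrite /pp /nn /vpos /vneg; ee; ifs; lia'.
Qed.

Lemma S_D z : Sset A z -> Dset A z.
Proof.
move=> [kz [nz hS]]; split => //; split => //; split.
- move=> [u [v [ku [kv [nu [nv [e [hle _]]]]]]]]; apply: hS.
  exists u, v; do 5 (split => //).
  move=> i; have := hle i; have := entry i e; rewrite /vpos; ee; ifs; lia'.
- move=> [u [v [ku [kv [nu [nv [e [hle _]]]]]]]]; apply: hS.
  exists v, u; do 4 (split => //); split; first by rewrite addrC.
  move=> i; have := hle i; have := entry i e; rewrite /vneg; ee; ifs; lia'.
Qed.

Lemma norm1N x : norm1 (- x) = norm1 x.
Proof. by rewrite /norm1; apply: eq_bigr => i _; rewrite eN abszN. Qed.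

Lemma red_split u z : reduces_distance u z -> exists e, (e = u \/ e = - u) /\
  ((nonneg (pp z + e) /\ (norm1 (z + e) < norm1 z)%N) \/
   (nonneg (nn z + e) /\ (norm1 (e - z) < norm1 z)%N)).
Proof.
move=> [pq [eps [epq [eeps [hnn hl]]]]].
have [e [Ee Eu]] : exists e, eps *: u = e /\ (e = u \/ e = - u).
  by case: eeps => ->; [exists u; rewrite scale1r | exists (- u); rewrite scaleN1r]; split => //; [left|right].
exists e; split => //; rewrite Ee in hnn hl.
case: epq => epq; rewrite epq /= -/(pp z) -/(nn z) in hnn hl; [left|right]; split => //.
- by have <- : pp z + e - nn z = z + e by vl.
- by have <- : nn z + e - pp z = e - z by vl.
Qed.

Lemma red_D z u : Dset A z -> reduces_distance u z -> inker A u -> u <> 0 -> u = z \/ u = - z.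
Proof.
move=> [kz [nz [hp hn]]] hr ku nu.
case: (red_split hr) => e [Eu hcase].
have ke : inker A e by case: Eu => ->; [|apply: inkerN].
have ne : e <> 0 by case: Eu => -> // /eqP; rewrite oppr_eq0 => /eqP.
suff : e = z \/ e = - z.
  by case: Eu => ->; case=> e'; [left|right|right|left]; [done|done|rewrite -e' opprK|apply: oppr_inj].
case: hcase => [[hnn hl]|[hnn hl]].
- have [v0|nv] := classic (z + e = 0).
    by right; apply: cwE => i; have := entry i v0; ee; lia'.
  exfalso; apply: hp; exists (- e), (z + e); do 2 (split; first by [apply: inkerN|rewrite /inker mulmxDr kz ke addr0]).
  split; first by move/eqP; rewrite oppr_eq0 => /eqP.
  split => //; split; first by apply: cwE => i; ee; lia'.
  split => // i; have := hnn i; rewrite /pp /vpos; ee; ifs; lia'.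
- have [v0|nv] := classic (z - e = 0).
    by left; apply: cwE => i; have := entry i v0; ee; lia'.
  exfalso; apply: hn; exists e, (z - e); do 2 (split; first by [|rewrite /inker mulmxBr kz ke subr0]).
  split => //; split => //; split; first by apply: cwE => i; ee; lia'.
  split; last by rewrite -norm1N opprB.
  move=> i; have := hnn i; rewrite /nn /vneg; ee; ifs; lia'.
Qed.

Lemma red_neg u z : reduces_distance u z -> reduces_distance (- u) z.
Proof.
move=> [pq [eps [e1 [e2 [h1 h2]]]]]; exists pq, (- eps).
have -> : - eps *: - u = eps *: u by rewrite scaleNr scalerN opprK.
split => //; split => //; case: e2 => ->; [right|left] => //; rewrite opprK.
Qed.

Lemma red0 z : ~ reduces_distance 0 z.
Proof.
move=> [pq [eps [e1 [e2 [h1 h2]]]]]; move: h2; rewrite scaler0 addr0.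
case: e1 => -> /=; rewrite -/(pp z) -/(nn z).
- by rewrite ppnn ltnn.
- by rewrite -opprB ppnn norm1N ltnn.
Qed.

Lemma DR_MB B : (forall u, B u -> inker A u) -> distance_reducing A B -> MB B.
Proof.
move=> kB DR; split => //.
suff h : forall N z, (norm1 z < N)%N -> inker A z -> conn B (pp z) (nn z).
  by move=> z kz; exact: h _ z (ltnSn _) kz.
elim => // N IH z hlt kz.
have [->|nz] := classic (z = 0); first by rewrite pp0; exact: conn0.
case: (DR z kz nz) => u Bu hr; case: (red_split hr) => e [Eu hcase].
have ke : inker A e by case: Eu => ->; [exact: kB|apply: inkerN; exact: kB].
have stp : forall y, nonneg (y + e) -> conn B y (y + e).
  by move=> y hy; apply: conn_step Bu _ hy; case: Eu => ->; [left|right].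
case: hcase => [[hnn hl]|[hnn hl]].
- have kz' : inker A (z + e) by rewrite /inker mulmxDr kz ke addr0.
  have c' := IH _ (leq_trans hl hlt) kz'.
  apply: conn_trans (stp _ hnn) _.
  by apply: conn_transl_ker c' hnn (nonneg_nn z) _; vl.
- have kz' : inker A (e - z) by rewrite /inker mulmxBr kz ke subr0.
  have c' := IH _ (leq_trans hl hlt) kz'.
  apply: conn_sym (nonneg_nn z) _; apply: conn_trans (stp _ hnn) _.
  by apply: conn_transl_ker c' hnn (nonneg_pp z) _; vl.
Qed.

Lemma minMB_DR B : minMB B -> distance_reducing A B -> minimal_distance_reducing A B.
Proof.
move=> [[kB hB] hmin] DR; split => //; split => // B' sB' DR'.
apply: hmin => //; apply: DR_MB => // u /sB'; exact: kB.
Qed.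

Lemma DR_flip M z : distance_reducing A M -> distance_reducing A (flip M z).
Proof.
move=> DR w kw nw; case: (DR w kw nw) => u Mu hr.
have [eu|ne] := classic (u = z); last by exists u => //; left.
by exists (- z); [right|apply: red_neg; rewrite -eu].
Qed.
End Comb.

Section Alg.
Variables (d n : nat) (A : 'M[int]_(d, n)) (K : fieldType).
Local Notation cV := 'cV[int]_n.
Local Notation P := {mpoly K[n]}.
Implicit Types (G : P -> Prop) (B : cV -> Prop) (x y z u : cV).
Ltac ifs := repeat match goal with |- context [if ?b then _ else _] => case: (boolP b) => ? end.
Ltac ee := do 3 rewrite ?eC ?eD ?eN ?e0.
Ltac gent := idtac.
Ltac lia' := lia.
Ltac vl := apply: cwE => i; rewrite /pp /nn /vpos /vneg; ee; ifs; lia'.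

Lemma I0 G : in_ideal_gen G 0.
Proof. by exists [::]; split => //; rewrite big_nil. Qed.

Lemma ID G p q : in_ideal_gen G p -> in_ideal_gen G q -> in_ideal_gen G (p + q).
Proof.
move=> [s1 [h1 ->]] [s2 [h2 ->]]; exists (s1 ++ s2); split; last by rewrite big_cat.
by move=> c; rewrite mem_cat => /orP [] ?; [exact: h1|exact: h2].
Qed.

Lemma IM G r p : in_ideal_gen G p -> in_ideal_gen G (r * p).
Proof.
move=> [s [h ->]]; exists [seq (r * c.1, c.2) | c <- s]; split.
  by move=> c /mapP [c' hc' ->] /=; exact: (h c' hc').
by rewrite big_map mulr_sumr; apply: eq_bigr => c _; rewrite mulrA.
Qed.

Lemma IG G g : G g -> in_ideal_gen G g.
Proof.
by move=> h; exists [:: (1, g)]; split; [move=> c; rewrite inE => /eqP -> | rewrite big_seq1 mul1r].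
Qed.

Lemma IN G p : in_ideal_gen G p -> in_ideal_gen G (- p).
Proof. by move=> h; rewrite -mulN1r; apply: IM. Qed.

Definition mv x : 'X_{1..n} := [multinom (absz (x i ord0)) | i < n].
Definition m2v (m : 'X_{1..n}) : cV := \col_i ((m i)%:Z).

Lemma mvD x y : nonneg x -> nonneg y -> mv (x + y) = (mv x + mv y)%MM.
Proof.
move=> hx hy; apply/mnmP => i; rewrite mnmDE !mnmE eD.
have := hx i; have := hy i; lia'.
Qed.

Lemma m2vD x m : nonneg x -> m2v (mv x + m) = x + m2v m.
Proof.
move=> hx; apply: cwE => i; rewrite eD !mxE mnmDE mnmE; have := hx i; lia'.
Qed.

Lemma m2v_mv x : nonneg x -> m2v (mv x) = x.
Proof. by move=> hx; apply: cwE => i; rewrite mxE mnmE; have := hx i; lia'. Qed.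

Lemma monom_pp z : monom K (vpos z) = 'X_[mv (pp z)].
Proof. by rewrite /monom; congr ('X_[_]); apply/mnmP => i; rewrite !mnmE eC absz_nat. Qed.
Lemma monom_nn z : monom K (vneg z) = 'X_[mv (nn z)].
Proof. by rewrite /monom; congr ('X_[_]); apply/mnmP => i; rewrite !mnmE eC absz_nat. Qed.

Lemma binomE z : binom K z = 'X_[mv (pp z)] - 'X_[mv (nn z)].
Proof. by rewrite /binom monom_pp monom_nn. Qed.

Lemma conn_ideal B x y : nonneg x -> conn B x y ->
  in_ideal_gen (binoms B) ('X_[mv x] - 'X_[mv y] : P).
Proof.
move=> hx c; elim: c => [|y1 y2 u c IH Bu e h]; first by rewrite subrr; exact: I0.
have h1 := conn_nonneg c hx.
have -> : ('X_[mv x] - 'X_[mv y2] : P) = ('X_[mv x] - 'X_[mv y1]) + ('X_[mv y1] - 'X_[mv y2]).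
  by rewrite addrA subrK.
apply: ID IH _.
have Gu : binoms B (binom K u) by exists u.
case: e => e.
- have eu : y2 - y1 = u by rewrite e; vl.
  have [hg [ea eb]] := decomp h h1 eu.
  move: hg ea eb; set g := y2 - pp u => hg ea eb.
  have -> : ('X_[mv y1] - 'X_[mv y2] : P) = - ('X_[mv g] * binom K u).
    rewrite binomE {1}eb ea (mvD (nonneg_nn u) hg) (mvD (nonneg_pp u) hg) !mpolyXD.
    by rewrite mulrBr opprB ![('X_[mv g] * _)]mulrC.
  by apply: IN; apply: IM; apply: IG.
- have eu : y1 - y2 = u by rewrite e; vl.
  have [hg [ea eb]] := decomp h1 h eu.
  move: hg ea eb; set g := y1 - pp u => hg ea eb.
  have -> : ('X_[mv y1] - 'X_[mv y2] : P) = 'X_[mv g] * binom K u.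
    rewrite binomE {1}ea eb (mvD (nonneg_nn u) hg) (mvD (nonneg_pp u) hg) !mpolyXD.
    by rewrite mulrBr ![('X_[mv g] * _)]mulrC.
  by apply: IM; apply: IG.
Qed.

Section Phi.
Variable hw : 'X_{1..n} -> K.
Definition phi (p : P) := \sum_(m <- msupp p) p@_m * hw m.

Lemma phiE (p : P) k : (msize p <= k)%N -> phi p = \sum_(m : 'X_{1..n < k}) p@_m * hw m.
Proof.
move=> le_pk; set I : subFinType _ := 'X_{1..n < k}.
rewrite /phi (big_mksub I) ?msupp_uniq //=; first last.
  by move=> x /msize_mdeg_lt /leq_trans; apply.
by rewrite big_rmcond //= => j /memN_msupp_eq0 ->; rewrite mul0r.
Qed.

Lemma phiB (p q : P) : phi (p - q) = phi p - phi q.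
Proof.
have h1 : (msize p <= msize p + msize q + msize (p - q))%N by rewrite -addnA leq_addr.
have h2 : (msize q <= msize p + msize q + msize (p - q))%N by rewrite addnAC leq_addl.
have h3 : (msize (p - q) <= msize p + msize q + msize (p - q))%N by rewrite leq_addl.
rewrite (phiE h3) (phiE h1) (phiE h2) -sumrB; apply: eq_bigr => m _; by rewrite mcoeffB mulrBl.
Qed.

Lemma phi0 : phi 0 = 0.
Proof. by have := phiB 0 0; rewrite subr0 subrr. Qed.

Lemma phiN (p : P) : phi (- p) = - phi p.
Proof. by rewrite -sub0r phiB phi0 sub0r. Qed.

Lemma phiD (p q : P) : phi (p + q) = phi p + phi q.
Proof. by have := phiB p (- q); rewrite opprK => ->; rewrite phiN opprK. Qed.

Lemma phiMX (q : P) a : phi (q * 'X_[a]) = \sum_(m <- msupp q) q@_m * hw (a + m)%MM.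
Proof.
by rewrite /phi (perm_big _ (msuppMX q a)) big_map; apply: eq_bigr => m _; rewrite mcoeffMX.
Qed.

Lemma phiX a : phi 'X_[a] = hw a.
Proof. by rewrite /phi msuppX big_seq1 mcoeffX eqxx mul1r. Qed.
End Phi.

Lemma ideal_conn B z : in_ideal_gen (binoms B) (binom K z) -> conn B (pp z) (nn z).
Proof.
move=> [s [hs e]]; apply: NNPP => nc.
pose C m := conn B (pp z) (m2v m).
pose hw m : K := if excluded_middle_informative (C m) then 1 else 0.
have hweq : forall u m, B u -> hw (mv (pp u) + m)%MM = hw (mv (nn u) + m)%MM.
  move=> u m Bu; rewrite /hw /C (m2vD m (nonneg_pp u)) (m2vD m (nonneg_nn u)).
  have hm : nonneg (m2v m) by move=> i; rewrite mxE.
  have n1 := nonnegD (nonneg_pp u) hm; have n2 := nonnegD (nonneg_nn u) hm.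
  case: excluded_middle_informative => c1; case: excluded_middle_informative => c2 //; exfalso.
  - apply: c2; apply: connS c1 Bu _ n2; right; vl.
  - apply: c1; apply: connS c2 Bu _ n1; left; vl.
have hterm : forall (q0 : P) u0, B u0 -> phi hw (q0 * binom K u0) = 0.
  move=> q0 u0 Bu0; rewrite binomE mulrBr phiB !phiMX -sumrB.
  by apply: big1 => m0 _; rewrite -mulrBr hweq // subrr mulr0.
have hsum : phi hw (\sum_(c <- s) c.1 * c.2) = 0.
  elim: s hs {e} => [|c s IH] hs; first by rewrite big_nil phi0.
  rewrite big_cons phiD IH ?addr0; last by move=> c' h; apply: hs; rewrite in_cons h orbT.
  by case: (hs c (mem_head _ _)) => u Bu ->; apply: hterm.
have hz : phi hw (binom K z) = 1.
  rewrite binomE phiB !phiX /hw /C (m2v_mv (nonneg_pp z)) (m2v_mv (nonneg_nn z)).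
  case: excluded_middle_informative => c1; last by case: c1; exact: conn0.
  by case: excluded_middle_informative => c2 //; rewrite subr0.
by move: hz; rewrite e hsum => /esym/eqP; rewrite oner_eq0.
Qed.

Lemma markov_MB B : markov_basis A K B <-> MB A B.
Proof.
split.
  move=> [kB hiff]; split => // z kz; apply: ideal_conn; apply/hiff.
  exists [:: (1, binom K z)]; split; last by rewrite big_seq1 mul1r.
  by move=> c; rewrite inE => /eqP -> /=; exists z.
move=> [kB hc]; split => // p; split.
  move=> [s [hs ->]]; exists s; split => // c /hs [u Bu ->]; exists u => //; exact: kB.
move=> [s [hs ->]]; elim: s hs => [|c s IH] hs; first by rewrite big_nil; exact: I0.
rewrite big_cons; apply: ID; last by apply: IH => c' h; apply: hs; rewrite in_cons h orbT.
case: (hs c (mem_head _ _)) => u ku ->; apply: IM; rewrite binomE.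
exact: conn_ideal (nonneg_pp u) (hc u ku).
Qed.

Lemma minimal_iff B : minimal_markov_basis A K B <-> minMB A B.
Proof.
split.
  move=> [/markov_MB h hmin]; split => // B' s /markov_MB; exact: hmin.
move=> [h hmin]; split; first exact/markov_MB.
by move=> B' s /markov_MB; exact: hmin.
Qed.

End Alg.


Unset Implicit Arguments.
Theorem proposition8p13 (K : fieldType) (d n : nat) (A : 'M[int]_(d, n))
  (M : 'cV[int]_n -> Prop) :
  (forall z : 'cV[int]_n, inker A z -> (forall i, 0 <= z i ord0) -> z = 0) ->
  unique_minimal_markov A K M ->
  distance_reducing A M ->
  forall z : 'cV[int]_n,
    (Sset A z <-> Dset A z) /\ (Dset A z <-> Mset A K z) /\
    (Mset A K z <-> Dcalset A z).
Proof.
move=> hpos [hMmin hU] DR z.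
have hM : minMB A M := (minimal_iff _ _ _).1 hMmin.
have hU' : forall B, minMB A B -> forall z, M z -> B z \/ B (- z).
  by move=> B hB z0 Mz0; exact: (hU B ((minimal_iff _ _ _).2 hB)).2 z0 Mz0.
have hpos' : posA A by move=> z0 k h; exact: hpos z0 k h.
have Mset_iff : forall z, Mset A K z <-> M z \/ M (- z).
  move=> z0; split; first by move=> [B hB Bz]; exact: (hU B hB).1 z0 Bz.
  case=> Mz; first by exists M.
  exists (flip M (- z0)); first exact/minimal_iff/(flip_min hM Mz).
  by right; rewrite opprK.
have S_pm : forall z, Sset A z <-> M z \/ M (- z).
  move=> z0; split; last exact: (pm_S hpos' hM hU').
  move=> hS; have hD := S_D hS; case: (hD) => [kz [nz _]].
  case: (DR z0 kz nz) => u Mu hr.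
  by case: (red_D hD hr (minMB_ker hM Mu) (minMB_nz hM Mu)) => e; [left|right]; rewrite -e.
have D_pm : forall z, Dset A z <-> M z \/ M (- z).
  move=> z0; split; last by move=> h; apply: S_D; apply/S_pm.
  move=> hD; case: (hD) => [kz [nz _]].
  case: (DR z0 kz nz) => u Mu hr.
  by case: (red_D hD hr (minMB_ker hM Mu) (minMB_nz hM Mu)) => e; [left|right]; rewrite -e.
have Dcal_pm : Dcalset A z <-> M z \/ M (- z).
  split.
    move=> [B [kB [DRB hminB]] Bz].
    pose M'' x := B x /\ (M x \/ M (- x)).
    have DR'' : distance_reducing A M''.
      move=> w kw nw; case: (DR w kw nw) => u Mu hr.
      have Du : Dset A u by apply/D_pm; left.
      have [ku nu] := pm_ker hM (or_introl Mu).
      case: (DRB u ku nu) => u' Bu' hr'.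
      have ku' := kB u' Bu'.
      have nu' : u' <> 0 by move=> e; rewrite e in hr'; exact: red0 hr'.
      case: (red_D Du hr' ku' nu') => e.
        by exists u'; [split => //; left; rewrite e | rewrite e].
      by exists u'; [split => //; right; rewrite e opprK | rewrite e; exact: (red_neg hr)].
    by case: (hminB M'' (fun x h => proj1 h) DR'' z Bz).
  case=> Mz.
    by exists M => //; apply: minMB_DR.
  exists (flip M (- z)); last by right; rewrite opprK.
  by apply: minMB_DR; [exact: (flip_min hM Mz) | exact: DR_flip].
split; first by rewrite S_pm D_pm.
split; first by rewrite D_pm Mset_iff.
by rewrite Mset_iff Dcal_pm.
Qed.
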